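(* There exist absolute constants $c_1,c_2>0$ such that for all integers $k\geq 1$ and $n\geq k+1$, there exists a connected graph $G_{k,n}$ with $\operatorname{tw}(G_{k,n})=k$ and $|V(G_{k,n})|=n$ such that $$c_1(n+k^2)\leq \operatorname{tw}(G_{k,n}\boxtimes G_{k,n})\leq c_2(n+k^2).$$
   Context: $\operatorname{tw}$ denotes treewidth. The strong product $G \boxtimes H$ has vertex set $V(G)\times V(H)$, with distinct vertices $(a,v),(b,u)$ adjacent iff ($a=b$ or $ab\in E(G)$) and ($u=v$ or $uv\in E(H)$). *)

(* Defs.v *)
From Stdlib Require Import Reals.
From mathcomp Require Import all_boot.
Set Implicit Arguments. Unset Strict Implicit. Unset Printing Implicit Defensive.

Definition simple_graph (V : finType) (e : rel V) : Prop :=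
  symmetric e /\ irreflexive e.

Definition connected_graph (V : finType) (e : rel V) : Prop :=
  forall x y : V, connect e x y.

Definition is_tree (I : finType) (t : rel I) : Prop :=
  0 < #|I| /\ simple_graph t /\ connected_graph t /\
  (forall c : seq I, 3 <= size c -> ~~ ucycleb t c).

Definition tree_decomposition (V I : finType) (e : rel V) (t : rel I)
    (B : I -> {set V}) : Prop :=
  [/\ is_tree t,
      (forall v : V, exists i : I, v \in B i),
      (forall u v : V, e u v -> exists i : I, (u \in B i) && (v \in B i)) &
      (forall (v : V) (i j : I), v \in B i -> v \in B j ->
          connect [rel a b | [&& t a b, v \in B a & v \in B b]] i j)].

Definition tw_le (V : finType) (e : rel V) (k : nat) : Prop :=
  exists (I : finType) (t : rel I) (B : I -> {set V}),
    tree_decomposition e t B /\ forall i : I, #|B i| <= k.+1.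

Definition tw_is (V : finType) (e : rel V) (k : nat) : Prop :=
  tw_le e k /\ forall j, tw_le e j -> k <= j.

Definition strong_prod (V W : finType) (e : rel V) (f : rel W) : rel (V * W) :=
  fun x y => [&& x != y, (x.1 == y.1) || e x.1 y.1 & (x.2 == y.2) || f x.2 y.2].

(* Main.v *)
Require Import Defs.
From Stdlib Require Import Reals Lra Classical.
From mathcomp Require Import all_boot zify.
Set Implicit Arguments. Unset Strict Implicit. Unset Printing Implicit Defensive.

Definition restr (I : finType) (S : {set I}) (t : rel I) : rel I :=
  fun a b => [&& a \in S, b \in S & t a b].
Definition conn (I : finType) (t : rel I) (S : {set I}) :=
  forall x y, x \in S -> y \in S -> connect (restr S t) x y.

Lemma conn_remove (I : finType) (t : rel I) (S : {set I}) (l : I) :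
  symmetric t -> conn t S -> l \in S ->
  (forall a b, a \in S -> b \in S -> t l a -> t l b -> a = b) ->
  conn t (S :\ l).
Proof.
move=> sym cS lS leaf x y; rewrite !in_setD1 => /andP[xl xS] /andP[yl yS].
have /connectP[p pp ey] := cS x y xS yS; subst y.
move: yl; case/shortenP: pp => p' pp' up' _ yl.
have lp' : l \notin p'.
  apply/negP => /splitPr Hs; move: Hs pp' up' yl => [p1 p2].
  case: p2 => [|b p3].
    by move=> _ _; rewrite last_cat /= eqxx.
  move=> pp' up' _.
  rewrite cat_path /= in pp'; case/and3P: pp' => _ /and3P[aS _ tal] /andP[/and3P[_ bS tlb] _].
  have eab := leaf _ _ aS bS (etrans (sym _ _) tal) tlb.
  move: up'; rewrite -cat_cons cat_uniq => /and3P[_ /hasPn H _].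
  have := H b; rewrite !inE eqxx orbT => /(_ isT).
  by rewrite -eab -in_cons mem_last.
apply/connectP; exists p' => //.
apply: (sub_in_path (P := [pred u | u != l])) pp' => [u w|].
  rewrite !inE /= => ul wl /and3P[uS wS tuw].
  by rewrite /restr !in_setD1 ul wl uS wS tuw.
apply/allP => u /=; rewrite inE => /orP[/eqP->//|up].
by apply/negP => /eqP ul; subst u; rewrite up in lp'.
Qed.
Lemma leaf_exists (I : finType) (t : rel I) (U : {set I}) (x : I) :
  symmetric t -> irreflexive t ->
  (forall c : seq I, 3 <= size c -> ~~ ucycleb t c) ->
  x \in U ->
  exists2 l, l \in U & (forall a b, a \in U -> b \in U -> t l a -> t l b -> a = b).
Proof.
move=> sym irr acyc xU.
move: x xU.
suff: forall d x p, #|I| - size (x :: p) = d -> all (mem U) (x :: p) ->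
   path t x p -> uniq (x :: p) ->
   exists2 l, l \in U & (forall a b, a \in U -> b \in U -> t l a -> t l b -> a = b).
  by move=> H x xU; move: (H _ x [::] erefl); rewrite /= xU; apply.
elim/ltn_ind => d IH x p Hd allU pp up.
case: (boolP [exists w, [&& w \in U, t (last x p) w & w \notin x :: p]]).
  case/existsP => w /and3P[wU tzw wn].
  have up2 : uniq (x :: rcons p w).
    by rewrite -rcons_cons rcons_uniq wn up.
  have := max_card (mem (x :: rcons p w)); rewrite (card_uniqP up2) /= size_rcons => Hc.
  apply: (IH _ _ x (rcons p w) erefl).
  - by rewrite -Hd /= size_rcons; lia.
  - by rewrite -rcons_cons all_rcons allU andbT; exact: wU.
  - by rewrite rcons_path pp tzw.
  - exact: up2.
rewrite negb_exists => /forallP Hno.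
have claim : forall w, w \in U -> t (last x p) w -> exists p1 y, p = p1 ++ [:: y] /\ last x p1 = w.
  move=> w wU tzw.
  have wp : w \in x :: p by move: (Hno w) => /=; apply: contraNT => wn; apply/and3P; split => //; exact: wU.
  case/splitPl: wp pp up tzw => p1 p2 lw pp up tzw.
  case: p2 pp up tzw => [|y [|y2 p3]] pp up tzw.
  - by rewrite cats0 lw irr in tzw.
  - by exists p1, y.
  - exfalso.
    have := acyc (w :: [:: y, y2 & p3]) isT; rewrite /ucycleb /=.
    rewrite cat_path lw in pp; case/andP: pp => _ pp.
    rewrite -cat_cons cat_uniq in up; case/and3P: up => _ /hasPn H up3.
    have wn : w \notin [:: y, y2 & p3].
      apply/negP => /H; rewrite -lw mem_last //.
    move: pp; rewrite /= => /and3P[-> -> pp3].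
    rewrite rcons_path pp3 /=.
    have -> : t (last y2 p3) w.
      by move: tzw; rewrite last_cat lw.
    move: up3 wn => /= /andP[-> /andP[-> ->]] /=.
    by rewrite !inE negb_or => /andP[-> ->].
exists (last x p).
  by move: allU => /allP; apply; apply: mem_last.
move=> a b aU bU tza tzb.
have [p1 [y [e1 l1]]] := claim a aU tza.
have [q1 [y' [e2 l2]]] := claim b bU tzb.
move: e2; rewrite e1 !cats1 => /rcons_inj [eq1 _].
by rewrite -l1 -l2 eq1.
Qed.

Lemma nbr_in (I : finType) (t : rel I) (S : {set I}) l y :
  conn t S -> l \in S -> y \in S -> y != l -> exists2 h, h \in S & t l h.
Proof.
move=> cS lS yS yl; have /connectP[[|h p] pp ey] := cS l y lS yS.
  by rewrite ey eqxx in yl.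
by case/andP: pp => /and3P[_ hS tlh] _; exists h.
Qed.

Lemma helly (I J : finType) (t : rel I) (A : {set J}) (S : J -> {set I}) :
  symmetric t -> irreflexive t ->
  (forall c : seq I, 3 <= size c -> ~~ ucycleb t c) ->
  forall U : {set I}, conn t U -> U != set0 ->
  (forall j, j \in A -> S j \subset U) -> (forall j, j \in A -> S j != set0) ->
  (forall j, j \in A -> conn t (S j)) ->
  (forall j1 j2, j1 \in A -> j2 \in A -> exists i, (i \in S j1) && (i \in S j2)) ->
  exists i, forall j, j \in A -> i \in S j.
Proof.
move=> sym irr acyc U.
move Hn : #|U| => n; elim: n U S Hn => [|n IH] U S Hn cU U0 SU S0 cS Sint.
  by move: U0; rewrite -cards_eq0 Hn.
case/set0Pn: U0 => x xU.
have [l lU leaf] := leaf_exists sym irr acyc xU.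
case: (boolP [exists j, (j \in A) && (S j \subset [set l])]).
  case/existsP => j /andP[jA Sjl]; exists l => j' j'A.
  have [i /andP[ij ij']] := Sint j j' jA j'A.
  by move: (subsetP Sjl i ij); rewrite inE => /eqP <-.
rewrite negb_exists => /forallP Hno.
have Hy : forall j, j \in A -> exists2 y, y \in S j & y != l.
  move=> j jA; move: (Hno j); rewrite jA /= => /subsetPn[y yS yl].
  by exists y => //; rewrite inE in yl.
case: (boolP (A == set0)) => [/eqP A0|/set0Pn[j0 j0A]].
  by exists x => j; rewrite A0 inE.
have [i Hi] : exists i, forall j, j \in A -> i \in S j :\ l.
  apply: (IH (U :\ l) (fun j => S j :\ l)).
  - by move: Hn; rewrite (cardsD1 l) lU add1n => -[].
  - exact: conn_remove.
  - have [y yS yl] := Hy j0 j0A; apply/set0Pn; exists y.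
    by rewrite in_setD1 yl (subsetP (SU j0 j0A)).
  - move=> j jA; apply/subsetP => z; rewrite !in_setD1 => /andP[-> /=].
    exact: (subsetP (SU j jA)).
  - move=> j jA; have [y yS yl] := Hy j jA; apply/set0Pn; exists y.
    by rewrite in_setD1 yl.
  - move=> j jA; case: (boolP (l \in S j)) => lS.
      apply: conn_remove => //; first exact: cS.
      move=> a b aS bS; apply: leaf; exact: (subsetP (SU j jA)).
    have -> : S j :\ l = S j.
      apply/setP => z; rewrite in_setD1; case: eqP => // ->.
      by rewrite (negbTE lS).
    exact: cS.
  - move=> j1 j2 j1A j2A; have [i /andP[i1 i2]] := Sint j1 j2 j1A j2A.
    case: (eqVneq i l) => [eil|nil]; last first.
      by exists i; rewrite !in_setD1 nil i1 i2.
    subst i.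
    have [y1 y1S y1l] := Hy j1 j1A; have [y2 y2S y2l] := Hy j2 j2A.
    have [h1 h1S tlh1] := nbr_in (cS j1 j1A) i1 y1S y1l.
    have [h2 h2S tlh2] := nbr_in (cS j2 j2A) i2 y2S y2l.
    have e12 : h1 = h2.
      apply: leaf tlh1 tlh2; [exact: (subsetP (SU j1 j1A)) | exact: (subsetP (SU j2 j2A))].
    subst h2; have hl : h1 != l by apply/eqP => e; rewrite e irr in tlh1.
    by exists h1; rewrite !in_setD1 hl h1S h2S.
by exists i => j jA; move: (Hi j jA); rewrite in_setD1 => /andP[].
Qed.

Lemma bramble (V I J : finType) (e : rel V) (t : rel I) (B : I -> {set V})
    (A : {set J}) (X : J -> {set V}) :
  tree_decomposition e t B ->
  (forall j, j \in A -> X j != set0) ->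
  (forall j, j \in A -> conn e (X j)) ->
  (forall j1 j2, j1 \in A -> j2 \in A ->
     exists u v, [&& u \in X j1, v \in X j2 & (u == v) || e u v]) ->
  (forall j1 j2 v, j1 \in A -> j2 \in A -> v \in X j1 -> v \in X j2 -> j1 = j2) ->
  exists i, #|A| <= #|B i|.
Proof.
case=> [[I0 [[sym irr] [tc tac]]] cov edg sub] X0 cX touch disj.
pose S j := [set i | [exists v, (v \in X j) && (v \in B i)]].
have inS : forall j i v, v \in X j -> v \in B i -> i \in S j.
  by move=> j i v vX vB; rewrite inE; apply/existsP; exists v; rewrite vX.
have lemA : forall j v i i', v \in X j -> v \in B i -> v \in B i' ->
    connect (restr (S j) t) i i'.
  move=> j v i i' vX vi vi'.
  apply: (connect_sub _ (sub v i i' vi vi')) => a b /and3P[tab va vb].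
  by apply: connect1; rewrite /restr tab (inS _ _ _ vX va) (inS _ _ _ vX vb).
have [i Hi] : exists i, forall j, j \in A -> i \in S j.
  apply: (@helly I J t A S sym irr tac setT).
  - move=> x y _ _; apply: (connect_sub _ (tc x y)) => a b tab.
    by apply: connect1; rewrite /restr !inE tab.
  - by apply/set0Pn; case/card_gt0P: I0 => i _; exists i; rewrite inE.
  - by move=> j _; apply: subsetT.
  - move=> j jA; have /set0Pn[v vX] := X0 j jA; have [i vi] := cov v.
    by apply/set0Pn; exists i; apply: inS vX vi.
  - move=> j jA x y; rewrite !inE => /existsP[v1 /andP[v1X v1x]] /existsP[v2 /andP[v2X v2y]].
    have /connectP[p pp ep] := cX j jA v1 v2 v1X v2X.
    elim: p v1 x v1X v1x pp ep => [|w p IHp] v1 x v1X v1x pp ep.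
      by rewrite ep in v2y; apply: lemA v1X v1x v2y.
    case/andP: pp => /and3P[_ wX ev1w] pp.
    have [i0 /andP[v1i0 wi0]] := edg _ _ ev1w.
    apply: (connect_trans (lemA _ _ _ _ v1X v1x v1i0)).
    exact: IHp wX wi0 pp ep.
  - move=> j1 j2 j1A j2A; have [u [v /and3P[uX vX /orP[/eqP euv|euv]]]] := touch j1 j2 j1A j2A.
      subst v; have [i ui] := cov u; exists i.
      by rewrite (inS _ _ _ uX ui) (inS _ _ _ vX ui).
    have [i /andP[ui vi]] := edg _ _ euv; exists i.
    by rewrite (inS _ _ _ uX ui) (inS _ _ _ vX vi).
exists i.
pose f j := [pick v in X j :&: B i].
have fP : forall j, j \in A -> exists2 v, f j = Some v & v \in X j :&: B i.
  move=> j jA; rewrite /f; case: pickP => [v vin|none]; first by exists v.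
  move: (Hi j jA); rewrite inE => /existsP[v /andP[vX vB]].
  by move: (none v); rewrite inE vX vB.
have finj : {in A &, injective f}.
  move=> j1 j2 j1A j2A; have [v1 -> v1in] := fP j1 j1A; have [v2 -> v2in] := fP j2 j2A.
  case=> ev; subst v2; move: v1in v2in; rewrite !inE => /andP[v1X _] /andP[v2X _].
  exact: disj v1X v2X.
rewrite -(card_in_imset finj).
have -> : #|B i| = #|[set Some v | v in B i]|.
  by rewrite card_imset //; move=> a b [].
apply: subset_leq_card; apply/subsetP => o /imsetP[j jA ->].
have [v -> vin] := fP j jA; apply/imsetP; exists v => //.
by move: vin; rewrite inE => /andP[].
Qed.

Lemma bramble_tw (V J : finType) (e : rel V) (w : nat)
    (A : {set J}) (X : J -> {set V}) :
  tw_le e w ->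
  (forall j, j \in A -> X j != set0) ->
  (forall j, j \in A -> conn e (X j)) ->
  (forall j1 j2, j1 \in A -> j2 \in A ->
     exists u v, [&& u \in X j1, v \in X j2 & (u == v) || e u v]) ->
  (forall j1 j2 v, j1 \in A -> j2 \in A -> v \in X j1 -> v \in X j2 -> j1 = j2) ->
  #|A| <= w.+1.
Proof.
move=> [I [t [B [td Bw]]]] H1 H2 H3 H4.
have [i Hi] := bramble td H1 H2 H3 H4.
exact: leq_trans Hi (Bw i).
Qed.
Definition star (I : finType) (c : I) : rel I := fun a b => (a == c) != (b == c).

Lemma star_conn (I : finType) (c : I) (R : rel I) (P : pred I) :
  (forall a, P a -> a != c -> R a c && R c a) -> P c ->
  forall x y, P x -> P y -> connect R x y.
Proof.
move=> H Pc x y Px Py.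
have h1 : connect R x c.
  case: (eqVneq x c) => [->|xc]; first exact: connect0.
  by apply: connect1; case/andP: (H x Px xc).
have h2 : connect R c y.
  case: (eqVneq y c) => [->|yc]; first exact: connect0.
  by apply: connect1; case/andP: (H y Py yc).
exact: connect_trans h1 h2.
Qed.

Lemma star_tree (I : finType) (c : I) : is_tree (star c).
Proof.
split; first by apply/card_gt0P; exists c.
split; first split.
- by move=> a b; rewrite /star; case: (a == c); case: (b == c).
- by move=> a; rewrite /star; case: (a == c).
split.
- move=> x y; apply: (star_conn (c := c) (P := predT)) => // a _ ac.
  by rewrite /star eqxx (negbTE ac).
case=> [|x0 [|x1 [|x2 rest]]] //= _.
rewrite /ucycleb /= rcons_path /= !inE.
apply/negP => /and5P[/and4P[e01 e12 pr lst] n0 n1 _ _].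
move: n0 n1; rewrite !negb_or => /and3P[x01 x02 _] /andP[x12 x1r].
move: e01 e12; rewrite /star.
case: (eqVneq x0 c) => [e0|n0]; case: (eqVneq x1 c) => [e1|n1];
  case: (eqVneq x2 c) => [e2|n2] //= _ _.
- by move: x02; rewrite e0 e2 eqxx.
- subst x1; case: rest pr lst x1r => [|r rest] pr lst x1r.
    by move: lst; rewrite /= /star (negbTE n2) (negbTE n0).
  move: pr x1r => /= /andP[]; rewrite /star (negbTE n2) /= => H _.
  have rc : r == c by move: H; case: (r == c).
  by rewrite inE (eqP rc) eqxx.
Qed.

Lemma star_td (V I : finType) (e : rel V) (c : I) (B : I -> {set V}) :
  (forall v, exists i, v \in B i) ->
  (forall u v, e u v -> exists i, (u \in B i) && (v \in B i)) ->
  (forall v i j, v \in B i -> v \in B j -> i = j \/ v \in B c) ->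
  tree_decomposition e (star c) B.
Proof.
move=> cov edg uq; split => //; first exact: star_tree.
move=> v i j vi vj; case: (uq v i j vi vj) => [<-|vc]; first exact: connect0.
apply: (star_conn (c := c) (P := fun a => v \in B a)) => // a va ac.
by rewrite /= /star eqxx (negbTE ac) va vc.
Qed.
Definition Gk (k N : nat) : rel 'I_N :=
  fun a b => (a != b) && ((a <= k) && (b <= k) || (nat_of_ord a == 0) || (nat_of_ord b == 0)).

Arguments Gk : clear implicits.

Lemma Gk_simple k N : simple_graph (Gk k N).
Proof.
split.
- move=> a b; rewrite /Gk eq_sym; congr (_ && _).
  by case: (a <= k); case: (b <= k); case: (nat_of_ord a == 0); case: (nat_of_ord b == 0).
- by move=> a; rewrite /Gk eqxx.
Qed.

Lemma card_small k N : #|[set v : 'I_N | v <= k]| <= k.+1.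
Proof.
have inj : {in [set v : 'I_N | v <= k] &, injective (fun v : 'I_N => (inord v : 'I_k.+1))}.
  move=> a b; rewrite !inE => ak bk /(congr1 (@nat_of_ord _)); rewrite !inordK ?ltnS // => eab.
  exact: val_inj.
rewrite -(card_in_imset inj); apply: leq_trans (max_card _) _.
by rewrite card_ord.
Qed.

Lemma Gk_conn k N : 0 < N -> connected_graph (Gk k N).
Proof.
move=> hN x y; apply: (star_conn (c := Ordinal hN) (P := predT)) => // a _ ac.
by rewrite /Gk /= !orbT !andbT ac eq_sym ac.
Qed.

Lemma Gk_tw_le k N (hN : 0 < N) : 1 <= k -> tw_le (Gk k N) k.
Proof.
move=> k1; set z := Ordinal hN.
pose B (i : 'I_N) : {set 'I_N} :=
  if nat_of_ord i == 0 then [set v : 'I_N | v <= k] else if i <= k then set0 else [set z; i].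
exists 'I_N, (star z), B; split; last first.
  move=> i; rewrite /B; case: ifP => _; first exact: card_small.
  case: ifP => _; first by rewrite cards0.
  by rewrite cards2; case: (_ != _) => /=; lia.
apply: star_td.
- move=> v; case: (leqP v k) => vk.
    by exists z; rewrite /B /= inE vk.
  exists v; rewrite /B ifF; last by apply/negbTE; lia.
  by rewrite leqNgt vk /= !inE eqxx orbT.
- move=> u v; rewrite /Gk => /andP[uv /orP[/orP[/andP[uk vk]|u0]|v0]].
  + by exists z; rewrite /B /= !inE uk vk.
  + case: (leqP v k) => vk.
      by exists z; rewrite /B /= !inE vk; rewrite (eqP u0).
    exists v; rewrite /B ifF; last by apply/negbTE; lia.
    rewrite leqNgt vk /= !inE eqxx orbT andbT.
    by rewrite -val_eqE /= u0.
  + case: (leqP u k) => uk.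
      by exists z; rewrite /B /= !inE uk; rewrite (eqP v0).
    exists u; rewrite /B ifF; last by apply/negbTE; lia.
    rewrite leqNgt uk /= !inE eqxx /= orbT.
    by rewrite /= -val_eqE /= v0.
- move=> v i j; case: (leqP v k) => vk.
    by right; rewrite /B /= inE vk.
  have vz : v != z by apply/eqP => /(congr1 (@nat_of_ord _)) /=; lia.
  rewrite /B; case: ifP => [_|i0]; first by rewrite inE leqNgt vk.
  case: ifP => [_|ik]; first by rewrite inE.
  rewrite !inE (negbTE vz) /= => /eqP <-.
  case: ifP => [_|j0]; first by rewrite inE leqNgt vk.
  case: ifP => [_|jk]; first by rewrite inE.
  by rewrite !inE (negbTE vz) /= => /eqP <-; left.
Qed.

Lemma conn1set (V : finType) (e : rel V) (x : V) : conn e [set x].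
Proof. by move=> a b; rewrite !inE => /eqP -> /eqP ->; apply: connect0. Qed.

Lemma Gk_tw_lower k N (hk : k < N) j : tw_le (Gk k N) j -> k <= j.
Proof.
move=> H.
have := bramble_tw (J := 'I_k.+1) (A := setT) (X := fun a => [set widen_ord hk a]) H.
rewrite cardsT card_ord ltnS; apply.
- by move=> a _; apply/set0Pn; exists (widen_ord hk a); rewrite inE.
- by move=> a _; apply: conn1set.
- move=> a b _ _; exists (widen_ord hk a), (widen_ord hk b); rewrite !inE !eqxx /=.
  rewrite /Gk /= -(ltnS a) -(ltnS b) !ltn_ord /=.
  by case: (_ == _).
- by move=> a b v _ _; rewrite !inE => /eqP -> /eqP /(congr1 (@nat_of_ord _)) /= ab; apply: val_inj.
Qed.

Lemma Gk_nat k N (a b : 'I_N) : Gk k N a b ->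
  (a <= k) && (b <= k) || (nat_of_ord a == 0) || (nat_of_ord b == 0).
Proof. by case/andP. Qed.

Lemma sp_nat k N (x y : 'I_N * 'I_N) : strong_prod (Gk k N) (Gk k N) x y ->
  ((x.1 == y.1 :> nat) || ((x.1 <= k) && (y.1 <= k) || (nat_of_ord x.1 == 0) || (nat_of_ord y.1 == 0))) &&
  ((x.2 == y.2 :> nat) || ((x.2 <= k) && (y.2 <= k) || (nat_of_ord x.2 == 0) || (nat_of_ord y.2 == 0))).
Proof.
case/and3P => _ /orP[e1|/Gk_nat g1] /orP[e2|/Gk_nat g2].
- by rewrite -!val_eqE in e1 e2; rewrite e1 e2.
- by rewrite -!val_eqE in e1; rewrite e1 g2 orbT.
- by rewrite -!val_eqE in e2; rewrite e2 g1 orbT.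
- by rewrite g1 g2 !orbT.
Qed.

Definition inb (k a b x1 x2 : nat) : bool :=
  if (a == 0) && (b == 0) then (x1 == 0) || (x2 == 0) || (x1 <= k) && (x2 <= k)
  else if (k < a) && (k < b) then ((x1 == a) || (x1 == 0)) && ((x2 == b) || (x2 == 0))
  else if (a == 0) && (k < b) then (x1 <= k) && ((x2 == b) || (x2 == 0))
  else if (k < a) && (b == 0) then ((x1 == a) || (x1 == 0)) && (x2 <= k)
  else false.

Definition fn (k x : nat) := if x <= k then 0 else x.

Lemma inb_uniq k a b x1 x2 : ~~ inb k 0 0 x1 x2 -> inb k a b x1 x2 ->
  a = fn k x1 /\ b = fn k x2.
Proof. rewrite /fn; case: (boolP (x1 <= k)) => ?; case: (boolP (x2 <= k)) => ?; rewrite /inb /=; do ?[case: ifP => ?]; lia. Qed.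

Lemma inb_cover k x1 x2 : ~~ inb k 0 0 x1 x2 -> inb k (fn k x1) (fn k x2) x1 x2.
Proof. rewrite /fn; case: (boolP (x1 <= k)) => ?; case: (boolP (x2 <= k)) => ?; rewrite /inb /=; do ?[case: ifP => ?]; lia. Qed.

Lemma inb_edge k x1 x2 y1 y2 : ~~ inb k 0 0 x1 x2 ->
  (x1 == y1) || ((x1 <= k) && (y1 <= k) || (x1 == 0) || (y1 == 0)) ->
  (x2 == y2) || ((x2 <= k) && (y2 <= k) || (x2 == 0) || (y2 == 0)) ->
  inb k (fn k x1) (fn k x2) y1 y2.
Proof. rewrite /fn; case: (boolP (x1 <= k)) => ?; case: (boolP (x2 <= k)) => ?; rewrite /inb /=; do ?[case: ifP => ?]; lia. Qed.

Lemma symc k (a b : nat) : [|| a == b, (a <= k) && (b <= k) || (a == 0) | b == 0] =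
  [|| b == a, (b <= k) && (a <= k) || (b == 0) | a == 0].
Proof. by rewrite eq_sym andbC; case: (a == 0); case: (b == 0); rewrite ?orbT ?orbF. Qed.

Lemma cardsU_le (T : finType) (A B : {set T}) : #|A :|: B| <= #|A| + #|B|.
Proof. by rewrite -cardsUI leq_addr. Qed.

Lemma card_T2 N (b : 'I_N) : #|[set v : 'I_N | (v == b :> nat) || (nat_of_ord v == 0)]| <= 2.
Proof.
have hN : 0 < N by apply: leq_ltn_trans (ltn_ord b).
apply: leq_trans (_ : #|[set b; Ordinal hN]| <= 2).
  apply: subset_leq_card; apply/subsetP => v; rewrite !inE -!val_eqE /=.
  by case/orP => ->; rewrite ?orbT.
by rewrite cards2; case: (_ != _).
Qed.

Lemma tw_prod_upper k N (hN : 0 < N) (hk : k < N) (k1 : 1 <= k) :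
  tw_le (strong_prod (Gk k N) (Gk k N)) (N + N + k.+1 * k.+1).
Proof.
set z := Ordinal hN.
pose B (i : 'I_N * 'I_N) : {set 'I_N * 'I_N} := [set x : 'I_N * 'I_N | inb k i.1 i.2 x.1 x.2].
exists ('I_N * 'I_N)%type, (star (z, z)), B; split.
  apply: star_td.
  - move=> x; case: (boolP (inb k 0 0 x.1 x.2)) => H.
      by exists (z, z); rewrite inE.
    have h1 : fn k x.1 < N by rewrite /fn; case: ifP.
    have h2 : fn k x.2 < N by rewrite /fn; case: ifP.
    by exists (Ordinal h1, Ordinal h2); rewrite inE /=; apply: inb_cover.
  - move=> x y /sp_nat /andP[e1 e2].
    case: (boolP (inb k 0 0 x.1 x.2)) => Hx; last first.
      have h1 : fn k x.1 < N by rewrite /fn; case: ifP.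
      have h2 : fn k x.2 < N by rewrite /fn; case: ifP.
      exists (Ordinal h1, Ordinal h2); rewrite !inE /= inb_cover //.
      exact: inb_edge.
    case: (boolP (inb k 0 0 y.1 y.2)) => Hy; last first.
      have h1 : fn k y.1 < N by rewrite /fn; case: ifP.
      have h2 : fn k y.2 < N by rewrite /fn; case: ifP.
      exists (Ordinal h1, Ordinal h2); rewrite !inE /= inb_cover // andbT.
      by apply: inb_edge Hy _ _; rewrite symc.
    by exists (z, z); rewrite !inE /= Hx Hy.
  - move=> v i j; rewrite !inE => vi vj.
    case: (boolP (inb k 0 0 v.1 v.2)) => Hv; [by right|left].
    have [a1 a2] := inb_uniq Hv vi; have [b1 b2] := inb_uniq Hv vj.
    by case: i j a1 a2 b1 b2 {vi vj} => [i1 i2] [j1 j2] /= a1 a2 b1 b2;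
      congr pair; apply: ord_inj; [rewrite a1 b1 | rewrite a2 b2].
move=> [a b]; rewrite /B /=.
case: (boolP ((a == 0 :> nat) && (b == 0 :> nat))) => Hc.
  pose U := setX [set z] [set: 'I_N] :|: setX [set: 'I_N] [set z] :|:
            setX [set v : 'I_N | v <= k] [set v : 'I_N | v <= k].
  apply: (@leq_trans #|U|).
    apply: subset_leq_card; apply/subsetP => -[x1 x2]; rewrite !inE /= -!val_eqE /=.
    rewrite /inb Hc; lia.
  rewrite /U; apply: leq_trans (cardsU_le _ _) _.
  apply: leq_trans (leq_add (cardsU_le _ _) (leqnn _)) _.
  rewrite !cardsX !cards1 cardsT card_ord.
  have := leq_mul (card_small k N) (card_small k N).
  set p := _ * _; set q := _ * _; lia.
pose X1 (c : 'I_N) := [set v : 'I_N | if k < c then (v == c :> nat) || (nat_of_ord v == 0) else v <= k].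
have cX : forall c, #|X1 c| <= k.+1.
  move=> c; case: (boolP (k < c)) => hc.
    apply: (@leq_trans #|[set v : 'I_N | (v == c :> nat) || (nat_of_ord v == 0)]|).
      by apply: subset_leq_card; apply/subsetP => v; rewrite !inE hc.
    by apply: leq_trans (card_T2 c) _.
  apply: leq_trans (card_small k N).
  by apply: subset_leq_card; apply/subsetP => v; rewrite !inE (negbTE hc).
apply: (@leq_trans #|setX (X1 a) (X1 b)|).
  apply: subset_leq_card; apply/subsetP => -[x1 x2]; rewrite !inE /=.
  move: Hc; rewrite /inb; do ?[case: ifP => ?]; lia.
rewrite cardsX; have := leq_mul (cX a) (cX b); lia.
Qed.

Lemma conn2 (V : finType) (e : rel V) (p q : V) : e p q -> e q p -> conn e [set p; q].
Proof.
move=> epq eqp x y; rewrite !inE => /orP[]/eqP-> /orP[]/eqP->;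
  try apply: connect0; apply: connect1; by rewrite /restr !inE !eqxx ?orbT.
Qed.

Lemma prod_lower_clique k N (hk : k < N) j :
  tw_le (strong_prod (Gk k N) (Gk k N)) j -> k.+1 * k.+1 <= j.+1.
Proof.
move=> H.
have := bramble_tw (J := ('I_k.+1 * 'I_k.+1)%type) (A := setT)
   (X := fun p => [set (widen_ord hk p.1, widen_ord hk p.2)]) H.
rewrite cardsT card_prod card_ord; apply.
- by move=> p _; apply/set0Pn; eexists; rewrite inE.
- by move=> p _; apply: conn1set.
- move=> p q _ _; exists (widen_ord hk p.1, widen_ord hk p.2), (widen_ord hk q.1, widen_ord hk q.2).
  rewrite !inE !eqxx /=.
  case: eqP => //= ne; rewrite /strong_prod /=.
  have -> : (widen_ord hk p.1, widen_ord hk p.2) != (widen_ord hk q.1, widen_ord hk q.2)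
    by apply/eqP.
  rewrite /= /Gk /= -(ltnS p.1) -(ltnS p.2) -(ltnS q.1) -(ltnS q.2) !ltn_ord /=.
  by case: (_ == _); case: (_ == _).
- move=> [p1 p2] [q1 q2] v _ _; rewrite !inE => /eqP -> /eqP [e1 e2].
  by congr pair; apply: ord_inj.
Qed.

Lemma prod_lower_minor k N L (hN : 0 < N) (hL : k.+1 + L <= N) j :
  tw_le (strong_prod (Gk k N) (Gk k N)) j -> L <= j.+1.
Proof.
move=> H; set z := Ordinal hN.
have hl : forall l : 'I_L, k.+1 + l < N.
  by move=> l; apply: leq_trans hL; rewrite ltn_add2l.
pose lv (l : 'I_L) : 'I_N := Ordinal (hl l).
have lvz : forall l, lv l != z by move=> l; rewrite -val_eqE /=.
have G1 : forall l, Gk k N z (lv l) by move=> l; rewrite /Gk eq_sym lvz /= !orbT.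
have G2 : forall l, Gk k N (lv l) z by move=> l; rewrite /Gk lvz /= !orbT.
have P1 : forall l1 l2, strong_prod (Gk k N) (Gk k N) (z, lv l1) (lv l2, z).
  move=> l1 l2; rewrite /strong_prod G1 G2 !orbT !andbT.
  by [].
have P2 : forall l1 l2, strong_prod (Gk k N) (Gk k N) (lv l2, z) (z, lv l1).
  move=> l1 l2; rewrite /strong_prod G1 G2 !orbT !andbT.
  by [].
have := bramble_tw (J := 'I_L) (A := setT) (X := fun l => [set (z, lv l); (lv l, z)]) H.
rewrite cardsT card_ord; apply.
- by move=> l _; apply/set0Pn; exists (z, lv l); rewrite !inE eqxx.
- by move=> l _; apply: conn2; [apply: P1 | apply: P2].
- move=> l1 l2 _ _; exists (z, lv l1), (lv l2, z); by rewrite !inE !eqxx ?orbT /= P1 ?orbT.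
- move=> l1 l2 [v1 v2] _ _; rewrite !inE -!pair_eqE /= -!val_eqE /=.
  move=> h1 h2; apply: ord_inj; lia.
Qed.

Lemma tw_min (V : finType) (e : rel V) w : tw_le e w -> exists m, tw_is e m /\ m <= w.
Proof.
elim/ltn_ind: w => w IH H.
case: (classic (exists j, j < w /\ tw_le e j)) => [[j [jw Hj]]|no].
  have [m [Hm mj]] := IH j jw Hj; exists m; split => //; lia.
exists w; split => //; split => // j Hj; rewrite leqNgt; apply/negP => jw.
by apply: no; exists j.
Qed.

Theorem mainTheorem9 :
  exists c1 c2 : R, Rlt 0 c1 /\ Rlt 0 c2 /\
    forall k n : nat, 1 <= k -> k.+1 <= n ->
      exists G : rel 'I_n,
        [/\ simple_graph G, connected_graph G, tw_is G k &
            exists m : nat, tw_is (strong_prod G G) m /\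
              Rle (Rmult c1 (INR (n + k ^ 2))) (INR m) /\
              Rle (INR m) (Rmult c2 (INR (n + k ^ 2)))].
Proof.
exists (Rinv (IZR 3)), (IZR 4); split; first lra; split; first lra.
move=> k n k1 kn.
have [L hL] : exists L, n = k.+1 + L by exists (n - k.+1); lia.
have hN : 0 < n by lia.
have hk : k < n by lia.
exists (Gk k n); split.
- exact: Gk_simple.
- exact: Gk_conn.
- by split; [exact: Gk_tw_le | exact: Gk_tw_lower].
have [m [[Hm Hmin] mw]] := tw_min (tw_prod_upper hN hk k1).
exists m; split; first by split.
have l1 := prod_lower_clique hk Hm.
have hL' : k.+1 + L <= n by lia.
have l2 := prod_lower_minor hN hL' Hm.
have e2 : k ^ 2 = k * k by rewrite mulnn.
have lo : n + k ^ 2 <= 3 * m by rewrite e2; nia.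
have up : m <= 4 * (n + k ^ 2) by rewrite e2; nia.
have lo' := le_INR _ _ (elimT leP lo).
have up' := le_INR _ _ (elimT leP up).
rewrite mult_INR in lo'; rewrite mult_INR in up'.
have h3 : INR 3 = IZR 3 by simpl; lra.
have h4 : INR 4 = IZR 4 by simpl; lra.
rewrite h3 in lo'; rewrite h4 in up'.
split; lra.
Qed.
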